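(* Let $n$ be an odd positive integer with $\Phi(n)=\mathcal{F}(n)$. Then $n\in\mathfrak{G}$, i.e. $\sum_{z\in\mathcal{G}_n} z^{\mathcal{F}(n)}\equiv \mathcal{F}(n)\pmod n$ in $\mathbb{Z}[i]/n\mathbb{Z}[i]$.
   Context: For a positive integer $n$, $\mathcal{G}_n=\{a+bi\in\mathbb{Z}[i]/n\mathbb{Z}[i] : a^2+b^2\equiv 1\pmod n\}$ and $\Phi(n)=|\mathcal{G}_n|$. The function $\mathcal{F}$ is defined by $\mathcal{F}(n)=n-1$ if $n\equiv 1\pmod 4$, $\mathcal{F}(n)=n+1$ if $n\equiv 3 \pmod 4$, $\mathcal{F}(n)=n$ otherwise. $\mathfrak{G}=\{n\in\mathbb{N} : \sum_{z\in\mathcal{G}_n} z^{\mathcal{F}(n)}\equiv \mathcal{F}(n)\pmod n\}$. *)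

(* Defs.v *)
From mathcomp Require Import all_boot.
Set Implicit Arguments. Unset Strict Implicit. Unset Printing Implicit Defensive.

(* Z[i]/nZ[i] is represented as pairs (a, b) of residues in 'I_n, standing
   for a + b i.  Arithmetic is done on representatives and reduced mod n. *)
Definition gauss (n : nat) : finType := ('I_n * 'I_n)%type.

Definition gmk (n : nat) (Hn : 0 < n) (a b : nat) : gauss n :=
  (Ordinal (ltn_pmod a Hn), Ordinal (ltn_pmod b Hn)).

Definition gzero n (Hn : 0 < n) : gauss n := gmk Hn 0 0.
Definition gone n (Hn : 0 < n) : gauss n := gmk Hn 1 0.

Definition gadd n (Hn : 0 < n) (z w : gauss n) : gauss n :=
  gmk Hn (z.1 + w.1) (z.2 + w.2).

(* (a + b i)(c + d i) = (ac - bd) + (ad + bc) i ; -bd is represented by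
   (n-1) * bd mod n so everything stays in nat. *)
Definition gmul n (Hn : 0 < n) (z w : gauss n) : gauss n :=
  gmk Hn (z.1 * w.1 + (n - 1) * (z.2 * w.2)) (z.1 * w.2 + z.2 * w.1).

Definition gexp n (Hn : 0 < n) (z : gauss n) (k : nat) : gauss n :=
  iter k (gmul Hn z) (gone Hn).

Definition Gn (n : nat) : {set gauss n} :=
  [set z : gauss n | (z.1 ^ 2 + z.2 ^ 2 == 1 %[mod n])].

Definition PhiG (n : nat) : nat := #|Gn n|.

Definition Fn (n : nat) : nat :=
  if n %% 4 == 1 then n - 1 else if n %% 4 == 3 then n + 1 else n.

Definition gsum n (Hn : 0 < n) (A : {set gauss n}) (f : gauss n -> gauss n)
  : gauss n := \big[gadd Hn / gzero Hn]_(z in A) f z.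

Definition inFrakG n (Hn : 0 < n) : Prop :=
  gsum Hn (Gn n) (fun z => gexp Hn z (Fn n)) = gmk Hn (Fn n) 0.

(* Main.v *)
From HB Require Import structures.
Require Import Defs.
From mathcomp Require Import all_boot.
From mathcomp Require Import all_algebra ring.
Import GRing.Theory.
Local Open Scope ring_scope.
Set Implicit Arguments. Unset Strict Implicit.

Section S.
Variables (n : nat) (Hn : (0 < n)%N).

Lemma gauss1 : n = 1%N -> forall z w : gauss n, z = w.
Proof.
move=> n1.
have o1 : forall a c : 'I_n, a = c.
  move=> a c; apply: val_inj.
  have ha : (val a < 1)%N := eq_ind n (fun m => (val a < m)%N) (ltn_ord a) 1%N n1.
  have hc : (val c < 1)%N := eq_ind n (fun m => (val c < m)%N) (ltn_ord c) 1%N n1.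
  by move: ha hc; rewrite !ltnS !leqn0 => /eqP -> /eqP ->.
by move=> [a b] [c d]; rewrite (o1 a c) (o1 b d).
Qed.

Definition phi (z : gauss n) : 'Z_n * 'Z_n := ((z.1 : nat)%:R, (z.2 : nat)%:R).

Hypothesis Hn1 : (1 < n)%N.

Lemma phi_inj : injective phi.
Proof.
move=> [a b] [c d] [] /(congr1 (@nat_of_ord _)) + /(congr1 (@nat_of_ord _)).
rewrite !val_Zp_nat // !modn_small // => e1 e2.
by congr pair; apply: val_inj.
Qed.

Lemma phi_gmk a b : phi (gmk Hn a b) = (a%:R, b%:R).
Proof. by rewrite /phi /= !Zp_nat_mod. Qed.

Lemma natn1 : ((n - 1)%N%:R : 'Z_n) = -1.
Proof. by rewrite natrB 1?ltnW // pchar_Zp // sub0r. Qed.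

Lemma phi_gmul z w : phi (gmul Hn z w) =
  ((phi z).1 * (phi w).1 - (phi z).2 * (phi w).2,
   (phi z).1 * (phi w).2 + (phi z).2 * (phi w).1).
Proof.
rewrite /gmul phi_gmk /= !natrD !natrM natn1; congr pair; ring.
Qed.

Lemma phi_gadd z w : phi (gadd Hn z w) =
  ((phi z).1 + (phi w).1, (phi z).2 + (phi w).2).
Proof. by rewrite /gadd phi_gmk /= !natrD. Qed.

Lemma phi_gone : phi (gone Hn) = (1, 0).
Proof. by rewrite /gone phi_gmk. Qed.

Lemma modZ a b : (a == b %[mod n]) = ((a%:R : 'Z_n) == b%:R).
Proof.
apply/eqP/eqP => [e|e]; first by rewrite -Zp_nat_mod // e Zp_nat_mod.
by move: (congr1 (@nat_of_ord _) e); rewrite !val_Zp_nat.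
Qed.

Lemma inGn z : (z \in Gn n) = ((phi z).1 ^+ 2 + (phi z).2 ^+ 2 == 1).
Proof. by rewrite inE modZ natrD !natrX. Qed.

End S.

Lemma phi_gconj n (Hn : (0 < n)%N) (Hn1 : (1 < n)%N) (z : gauss n) :
  phi (gmk Hn z.1 (n - z.2)) = ((phi z).1, - (phi z).2).
Proof.
rewrite phi_gmk //= natrB ?pchar_Zp ?sub0r //; exact: ltnW.
Qed.

Lemma n1_or n : (0 < n)%N -> n = 1%N \/ (1 < n)%N.
Proof. by case: n => [|[|m]] //= _; [left|right]. Qed.

Ltac gsolve Hn Hn1 := apply: (phi_inj Hn1);
  rewrite ?phi_gmul ?phi_gone ?phi_gadd ?phi_gconj //=; congr pair; ring.

Lemma gmulA n (Hn : (0 < n)%N) : associative (gmul Hn).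
Proof.
move=> x y z; case: (n1_or Hn) => [n1|Hn1]; first exact: gauss1.
apply: (phi_inj Hn1); rewrite !phi_gmul //=; congr pair; ring.
Qed.

Lemma gmulC n (Hn : (0 < n)%N) : commutative (gmul Hn).
Proof.
move=> x y; case: (n1_or Hn) => [n1|Hn1]; first exact: gauss1.
apply: (phi_inj Hn1); rewrite !phi_gmul //=; congr pair; ring.
Qed.

Lemma gmul1 n (Hn : (0 < n)%N) : left_id (gone Hn) (gmul Hn).
Proof.
move=> x; case: (n1_or Hn) => [n1|Hn1]; first exact: gauss1.
apply: (phi_inj Hn1); rewrite !phi_gmul // phi_gone //=.
by rewrite /phi; congr pair; ring.
Qed.

HB.instance Definition _ n (Hn : (0 < n)%N) :=
  Monoid.isComLaw.Build (gauss n) (gone Hn) (gmul Hn) (@gmulA n Hn) (@gmulC n Hn) (@gmul1 n Hn).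

Section Main.
Variables (n : nat) (Hn : (0 < n)%N) (Hn1 : (1 < n)%N).
Local Notation G := (Gn n).
Definition gconj (z : gauss n) := gmk Hn z.1 (n - z.2).

Lemma conjK z : z \in G -> gmul Hn (gconj z) z = gone Hn.
Proof.
rewrite (inGn Hn1) => /eqP h.
apply: (phi_inj Hn1); rewrite phi_gmul // phi_gconj // phi_gone //.
case: (phi z) h => a b /= h.
rewrite -h; congr pair; ring.
Qed.

Lemma G1 : gone Hn \in G.
Proof. by rewrite (inGn Hn1) phi_gone //= expr0n /= addr0 expr1n. Qed.

Lemma GM z w : z \in G -> w \in G -> gmul Hn z w \in G.
Proof.
rewrite !(inGn Hn1) phi_gmul //; case: (phi z) => a b; case: (phi w) => c d /= /eqP hz /eqP hw; apply/eqP.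
rewrite -[1]mulr1 -{1}hz -hw; ring.
Qed.

Lemma Gconj z : z \in G -> gconj z \in G.
Proof.
rewrite !(inGn Hn1) phi_gconj //; case: (phi z) => a b /= /eqP hz; apply/eqP; rewrite -hz; ring.
Qed.

Lemma expG z : z \in G -> gexp Hn z #|G| = gone Hn.
Proof.
move=> zG.
pose P := \big[gmul Hn/gone Hn]_(w in G) w.
have PG : P \in G by apply: (big_ind (fun x => x \in G)) => //; [exact: G1|exact: GM].
have inj : injective (gmul Hn z).
  move=> x y e; rewrite -(gmul1 Hn x) -(gmul1 Hn y) -(conjK zG) -!gmulA.
  by rewrite e.
have eP : P = gmul Hn (gexp Hn z #|G|) P.
  rewrite {1}/P (reindex_inj inj) /=.
  rewrite (eq_bigl (fun w => w \in G)); last first.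
    move=> w /=; apply/idP/idP => [h|]; last exact: GM.
    have := GM (Gconj zG) h; by rewrite gmulA conjK // gmul1.
  by rewrite big_split /= big_const.
have := congr1 (fun x => gmul Hn x (gconj P)) eP => /=.
rewrite -gmulA [gmul Hn P _]gmulC conjK // gmulC gmul1 => ->.
done.
Qed.

Lemma iter_one k : iter k (gadd Hn (gone Hn)) (gzero Hn) = gmk Hn k 0.
Proof.
apply: (phi_inj Hn1); elim: k => [|k IH]; first by rewrite phi_gmk.
rewrite iterS phi_gadd // IH phi_gone // !phi_gmk //= -natr1 addrC addr0.
done.
Qed.

End Main.

Theorem mainTheorem15 (n : nat) (Hn : (0 < n)%N) :
  odd n -> PhiG n = Fn n -> inFrakG Hn.
Proof.
move=> _ HF; case: (n1_or Hn) => [n1|Hn1]; first exact: gauss1.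
rewrite /inFrakG /gsum (eq_bigr (fun _ => gone Hn)); last first.
  by move=> z zG; rewrite -HF /PhiG expG.
by rewrite big_const -HF iter_one.
Qed.
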